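(* Let $G=(V,E,\sigma)$ be a graph as in the context, $\Gamma$ a nonempty family of walks, and $1<p<\infty$. For $q>1$ let $\rho_q$ denote the unique extremal density for $\mathrm{Mod}_q(\Gamma)$. Then $\lim_{q\to p}\|\rho_p-\rho_q\|=0$ for any norm $\|\cdot\|$ on $\mathbb{R}^E$.
   Context: Let $G=(V,E,\sigma)$ be a finite simple graph (directed or undirected) with edge weights $\sigma:E\to(0,\infty)$. A walk is a string of edges $e_1\dots e_r$, $r\ge1$, $e_i=(v_i,v_{i+1})\in E$, with $\rho$-length $\ell_\rho(\gamma)=\sum_i\rho(e_i)$. $A(\Gamma)=\{\rho:E\to\mathbb{R}:\rho\ge0,\ \ell_\rho(\gamma)\ge1\ \forall\gamma\in\Gamma\}$, $\mathcal{E}_q(\rho)=\sum_e\sigma(e)|\rho(e)|^q$, $\mathrm{Mod}_q(\Gamma)=\inf_{\rho\in A(\Gamma)}\mathcal{E}_q(\rho)$; an extremal density is a minimizer in $A(\Gamma)$, unique when $1<q<\infty$. *)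

(* Defs.v *)
From Stdlib Require Import Reals List.
Import ListNotations.
Open Scope R_scope.

Fixpoint sum_list {E : Type} (f : E -> R) (l : list E) : R :=
  match l with
  | [] => 0
  | e :: l' => f e + sum_list f l'
  end.

(* x^q for x >= 0 and real q > 0, with the convention 0^q = 0. *)
Definition rpow (x q : R) : R :=
  if Req_EM_T x 0 then 0 else Rpower x q.

(* E is the (finite) edge
   type enumerated by enumE, ends e = (u,v) are the endpoints of e
   (for undirected graphs an arbitrary orientation of the edge {u,v}). *)
Definition simple_graph {V E : Type} (directed : bool) (enumE : list E)
  (ends : E -> V * V) : Prop :=
  NoDup enumE /\ (forall e, In e enumE) /\
  (forall e, fst (ends e) <> snd (ends e)) /\
  (forall e e', ends e = ends e' -> e = e') /\
  (directed = false -> forall e e',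
       ends e = (snd (ends e'), fst (ends e')) -> e = e').

Definition joins {V E : Type} (directed : bool) (ends : E -> V * V)
  (e : E) (u w : V) : Prop :=
  ends e = (u, w) \/ (directed = false /\ ends e = (w, u)).

Inductive walk_from {V E : Type} (directed : bool) (ends : E -> V * V)
  : V -> list E -> Prop :=
| walk_one : forall e u w, joins directed ends e u w ->
    walk_from directed ends u [e]
| walk_cons : forall e u w rest, joins directed ends e u w ->
    walk_from directed ends w rest -> walk_from directed ends u (e :: rest).

Definition is_walk {V E : Type} (directed : bool) (ends : E -> V * V)
  (g : list E) : Prop := exists u, walk_from directed ends u g.

Definition rho_length {E : Type} (rho : E -> R) (g : list E) : R :=
  sum_list rho g.

Definition admissible {E : Type} (Gamma : list E -> Prop) (rho : E -> R) : Prop :=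
  (forall e, 0 <= rho e) /\ (forall g, Gamma g -> 1 <= rho_length rho g).

Definition energy {E : Type} (enumE : list E) (sigma : E -> R) (q : R)
  (rho : E -> R) : R :=
  sum_list (fun e => sigma e * rpow (Rabs (rho e)) q) enumE.

Definition extremal_density {E : Type} (enumE : list E) (sigma : E -> R)
  (Gamma : list E -> Prop) (q : R) (rho : E -> R) : Prop :=
  admissible Gamma rho /\
  forall rho', admissible Gamma rho' -> energy enumE sigma q rho <= energy enumE sigma q rho'.

Definition is_norm {E : Type} (N : (E -> R) -> R) : Prop :=
  (forall x, 0 <= N x) /\
  (forall x, N x = 0 -> forall e, x e = 0) /\
  (forall c x, N (fun e => c * x e) = Rabs c * N x) /\
  (forall x y, N (fun e => x e + y e) <= N x + N y).

(* Main.v *)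
Require Import Defs.
From Stdlib Require Import Reals List.
From Stdlib Require Import Lra Psatz ClassicalEpsilon FunctionalExtensionality.
From Coquelicot Require Coquelicot.
Import ListNotations.
Open Scope R_scope.

Lemma exp_le' x y : x <= y -> exp x <= exp y.
Proof. intros [H|H]; [left; apply exp_increasing; auto| subst; lra]. Qed.

Lemma ln_le' x y : 0 < x -> x <= y -> ln x <= ln y.
Proof. intros Hx [H|H]; [left; apply ln_increasing; auto| subst; lra]. Qed.

Lemma Rpower_pos x a : 0 < Rpower x a.
Proof. unfold Rpower; apply exp_pos. Qed.

Lemma Rpower_1_l a : Rpower 1 a = 1.
Proof. unfold Rpower; rewrite ln_1, Rmult_0_r; apply exp_0. Qed.

Lemma rpow_pos x a : 0 < x -> rpow x a = Rpower x a.
Proof. intros H; unfold rpow; destruct (Req_EM_T x 0); [lra|auto]. Qed.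

Lemma rpow_0 a : rpow 0 a = 0.
Proof. unfold rpow; destruct (Req_EM_T 0 0); [auto|lra]. Qed.

Lemma rpow_nonneg x a : 0 <= rpow x a.
Proof. unfold rpow; destruct (Req_EM_T x 0); [lra|left; apply Rpower_pos]. Qed.

Lemma rpow_1 a : rpow 1 a = 1.
Proof. rewrite rpow_pos by lra; apply Rpower_1_l. Qed.

Lemma tangent_pos a t x : 1 <= a -> 0 < t -> 0 < x ->
  Rpower t a + a * Rpower t (a-1) * (x - t) <= Rpower x a.
Proof.
  intros Ha Ht Hx.
  destruct (Coquelicot.Derive.MVT_gen (fun y => Rpower y a) t x
     (fun y => a * Rpower y (a-1))) as [c [Hc Heq]].
  - intros y Hy. apply Coquelicot.Derive.is_derive_Reals.
    apply derivable_pt_lim_power.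
    assert (0 < Rmin t x) by (apply Rmin_glb_lt; lra). lra.
  - intros y Hy. assert (0 < Rmin t x) by (apply Rmin_glb_lt; lra).
    apply derivable_continuous_pt.
    exists (a * Rpower y (a-1)). apply derivable_pt_lim_power. lra.
  - simpl in Heq.
    assert (Hmin : 0 < Rmin t x) by (apply Rmin_glb_lt; lra).
    destruct (Rle_or_lt t x) as [Htx|Htx].
    + rewrite Rmin_left in Hc by lra. rewrite Rmax_right in Hc by lra.
      assert (Rpower t (a-1) <= Rpower c (a-1)) by (apply Rle_Rpower_l; lra).
      assert (0 <= a * (x - t)) by nra. nra.
    + rewrite Rmin_right in Hc by lra. rewrite Rmax_left in Hc by lra.
      assert (Rpower c (a-1) <= Rpower t (a-1)) by (apply Rle_Rpower_l; lra).
      assert (0 <= a * (t - x)) by nra.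
      assert (a*(t-x)*Rpower c (a-1) <= a*(t-x)*Rpower t (a-1)) by (apply Rmult_le_compat_l; lra).
      nra.
Qed.

Lemma Rpower_a_1 t a : 0 < t -> Rpower t (a-1) * t = Rpower t a.
Proof.
  intros Ht. rewrite <- (Rpower_1 t) at 2 by auto.
  rewrite <- Rpower_plus. f_equal. ring.
Qed.

Lemma tangent a t x : 1 <= a -> 0 < t -> 0 <= x ->
  Rpower t a + a * Rpower t (a-1) * (x - t) <= rpow x a.
Proof.
  intros Ha Ht [Hx|Hx].
  - rewrite rpow_pos by auto. apply tangent_pos; auto.
  - subst. rewrite rpow_0.
    pose proof (Rpower_a_1 t a Ht). pose proof (Rpower_pos t a).
    pose proof (Rpower_pos t (a-1)). nra.
Qed.

Lemma midconv a x y : 1 <= a -> 0 <= x -> 0 <= y ->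
  rpow ((x+y)/2) a <= (rpow x a + rpow y a)/2.
Proof.
  intros Ha Hx Hy.
  destruct (Req_dec (x+y) 0) as [H0|H0].
  - assert (x = 0) by lra. assert (y = 0) by lra. subst.
    replace ((0+0)/2) with 0 by field. rewrite rpow_0. lra.
  - assert (Ht : 0 < (x+y)/2) by lra.
    pose proof (tangent a _ x Ha Ht Hx). pose proof (tangent a _ y Ha Ht Hy).
    rewrite (rpow_pos ((x+y)/2)) by auto. nra.
Qed.

Definition c_gap a B eta :=
  (a*eta/8) * Rpower (eta/2) (a-1) * (1 - Rpower (1 - eta/(2*B)) (a-1)).

Lemma c_gap_pos a B eta : 1 < a -> 0 < eta -> eta <= B -> 0 < c_gap a B eta.
Proof.
  intros Ha He HB. unfold c_gap.
  assert (Hw : 0 < eta/(2*B) <= 1/2).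
  { split. apply Rdiv_lt_0_compat; lra.
    apply (Rmult_le_reg_r (2*B)); [lra|]. field_simplify; lra. }
  assert (Rpower (1 - eta/(2*B)) (a-1) < 1).
  { assert (Rpower (1 - eta/(2*B)) (a-1) < Rpower 1 (a-1)) by (apply Rlt_Rpower_l; lra).
    rewrite Rpower_1_l in H; auto. }
  pose proof (Rpower_pos (eta/2) (a-1)).
  assert (0 < a*eta/8) by (assert (0 < a*eta) by nra; lra).
  apply Rmult_lt_0_compat; [apply Rmult_lt_0_compat|]; lra.
Qed.

Lemma gap_lt a B eta x y : 1 < a -> 0 < eta -> eta <= B -> 0 <= x -> x < y ->
  y <= B -> eta <= y - x ->
  c_gap a B eta <= (rpow x a + rpow y a)/2 - rpow ((x+y)/2) a.
Proof.
  intros Ha He HeB Hx Hxy HyB Hd.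
  set (x' := (3*x+y)/4). set (y' := (x+3*y)/4).
  assert (Hx' : 0 < x') by (unfold x'; lra).
  assert (Hy' : 0 < y') by (unfold y'; lra).
  pose proof (tangent a y' y ltac:(lra) Hy' ltac:(lra)) as T1.
  pose proof (tangent a x' x ltac:(lra) Hx' Hx) as T2.
  pose proof (midconv a x' y' ltac:(lra) ltac:(lra) ltac:(lra)) as M.
  replace ((x'+y')/2) with ((x+y)/2) in M by (unfold x', y'; field).
  rewrite (rpow_pos x'), (rpow_pos y') in M by auto.
  set (r := a - 1) in *.
  set (w := eta/(2*B)).
  assert (Hw : 0 < w <= 1/2).
  { unfold w. split. apply Rdiv_lt_0_compat; lra.
    apply (Rmult_le_reg_r (2*B)); [lra|]. field_simplify; lra. }
  assert (HwB : w * (2*B) = eta) by (unfold w; field; lra).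
  assert (Hq : x' / y' <= 1 - w).
  { apply (Rmult_le_reg_r y'); [lra|]. unfold Rdiv. rewrite Rmult_assoc, Rinv_l by lra.
    assert (y' <= B) by (unfold y'; lra).
    assert (y' - x' = (y-x)/2) by (unfold x', y'; field).
    nra. }
  assert (Hq0 : 0 < x'/y') by (apply Rdiv_lt_0_compat; lra).
  assert (HX : Rpower x' r = Rpower y' r * Rpower (x'/y') r).
  { rewrite Rpower_mult_distr by auto. f_equal. field. lra. }
  assert (H1 : Rpower (x'/y') r <= Rpower (1-w) r) by (apply Rle_Rpower_l; unfold r; lra).
  assert (H2 : Rpower (1-w) r <= 1).
  { assert (Rpower (1-w) r <= Rpower 1 r) by (apply Rle_Rpower_l; unfold r; lra).
    rewrite Rpower_1_l in H; auto. }
  assert (H3 : Rpower (eta/2) r <= Rpower y' r).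
  { apply Rle_Rpower_l; unfold r; try lra. split; [lra|].
    assert (y' - x' = (y-x)/2) by (unfold x', y'; field). lra. }
  pose proof (Rpower_pos (eta/2) r) as P1.
  pose proof (Rpower_pos y' r) as P2.
  assert (HD : Rpower (eta/2) r * (1 - Rpower (1-w) r) <= Rpower y' r - Rpower x' r).
  { rewrite HX.
    assert (Rpower y' r * (1 - Rpower (1-w) r) <= Rpower y' r * (1 - Rpower (x'/y') r))
      by (apply Rmult_le_compat_l; lra).
    assert (Rpower (eta/2) r * (1 - Rpower (1-w) r) <= Rpower y' r * (1 - Rpower (1-w) r))
      by (apply Rmult_le_compat_r; lra).
    lra. }
  assert (HG : a * (y-x)/8 * (Rpower y' r - Rpower x' r) <=
               (rpow x a + rpow y a)/2 - rpow ((x+y)/2) a).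
  { assert (y - y' = (y-x)/4) by (unfold y'; field).
    assert (x - x' = -((y-x)/4)) by (unfold x'; field).
    rewrite H, H0 in *. nra. }
  unfold c_gap. fold r. fold w.
  eapply Rle_trans; [|exact HG].
  rewrite Rmult_assoc.
  assert (0 <= 1 - Rpower (1-w) r) by lra.
  apply Rmult_le_compat.
  - assert (0 <= a*eta) by nra. lra.
  - apply Rmult_le_pos; lra.
  - assert (a*eta <= a*(y-x)) by nra. lra.
  - lra.
Qed.

Lemma gap a B eta x y : 1 < a -> 0 < eta -> eta <= B -> 0 <= x <= B -> 0 <= y <= B ->
  eta <= Rabs (x - y) ->
  c_gap a B eta <= (rpow x a + rpow y a)/2 - rpow ((x+y)/2) a.
Proof.
  intros Ha He HeB Hx Hy Hd.
  destruct (Rlt_or_le x y) as [Hxy|Hxy].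
  - rewrite Rabs_minus_sym, Rabs_pos_eq in Hd by lra. apply gap_lt; lra.
  - destruct Hxy as [Hxy|Hxy].
    + rewrite Rabs_pos_eq in Hd by lra.
      replace ((rpow x a + rpow y a)/2) with ((rpow y a + rpow x a)/2) by lra.
      replace ((x+y)/2) with ((y+x)/2) by lra. apply gap_lt; lra.
    + subst. rewrite Rminus_diag, Rabs_R0 in Hd. lra.
Qed.

Lemma lip_le x a b B P : 0 <= x <= B -> 1 <= B -> 1 <= a -> a <= b -> b <= P ->
  Rabs (rpow x a - rpow x b) <= (b - a) * (1 + B * Rpower B P).
Proof.
  intros [Hx0 HxB] HB Ha Hab HbP.
  pose proof (Rpower_pos B P) as HBP.
  assert (HK : 0 <= (b - a) * (B * Rpower B P)) by (apply Rmult_le_pos; nra).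
  destruct Hx0 as [Hx0|Hx0]; [|subst; rewrite !rpow_0, Rminus_diag, Rabs_R0; nra].
  rewrite !rpow_pos by auto.
  assert (Hb : Rpower x b = Rpower x a * exp ((b-a) * ln x)).
  { replace b with (a + (b-a)) at 1 by ring. rewrite Rpower_plus. reflexivity. }
  pose proof (Rpower_pos x a) as Pa.
  destruct (Rle_or_lt x 1) as [Hx1|Hx1].
  - assert (Hl : ln x <= 0) by (rewrite <- ln_1; apply ln_le'; lra).
    pose proof (exp_ineq1_le ((b-a) * ln x)) as E1.
    assert (Hxa : Rpower x a <= x).
    { unfold Rpower. rewrite <- (exp_ln x) at 2 by auto. apply exp_le'. nra. }
    assert (Hxl : x * (- ln x) <= 1).
    { pose proof (exp_ineq1_le (- ln x)) as E2. rewrite exp_Ropp, exp_ln in E2 by auto.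
      assert (x * (1 + - ln x) <= x * / x) by (apply Rmult_le_compat_l; lra).
      rewrite Rinv_r in H by lra. nra. }
    assert (exp ((b-a) * ln x) <= 1).
    { rewrite <- exp_0. apply exp_le'. nra. }
    rewrite Hb. rewrite Rabs_pos_eq by nra.
    (* Rpower x a * (1 - e) <= Rpower x a * (-(b-a) ln x) <= x*(b-a)*(-ln x) <= b-a *)
    assert (Rpower x a * (1 - exp ((b-a) * ln x)) <= Rpower x a * ((b-a) * (- ln x)))
      by (apply Rmult_le_compat_l; lra).
    assert (Rpower x a * ((b-a) * (- ln x)) <= x * ((b-a) * (- ln x)))
      by (apply Rmult_le_compat_r; nra).
    nra.
  - assert (Hl : 0 <= ln x) by (rewrite <- ln_1; apply ln_le'; lra).
    set (u := (b-a) * ln x) in *.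
    assert (Hu : 0 <= u) by (unfold u; nra).
    pose proof (exp_ineq1_le (- u)) as E1. rewrite exp_Ropp in E1.
    pose proof (exp_pos u).
    assert (Eu : exp u - 1 <= u * exp u).
    { assert (exp u * (1 + - u) <= exp u * / exp u) by (apply Rmult_le_compat_l; lra).
      rewrite Rinv_r in H0 by lra. nra. }
    assert (exp u >= 1) by (pose proof (exp_ineq1_le u); lra).
    rewrite Rabs_minus_sym, Rabs_pos_eq by (rewrite Hb; nra).
    assert (Hlx : ln x <= B) by (pose proof (exp_ineq1_le (ln x)); rewrite exp_ln in *; lra).
    assert (Hxb : Rpower x b <= Rpower B P).
    { apply Rle_trans with (Rpower B b).
      apply Rle_Rpower_l; lra. apply Rle_Rpower; lra. }
    assert (Rpower x b - Rpower x a <= Rpower x b * u).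
    { rewrite Hb. assert (Rpower x a * (exp u - 1) <= Rpower x a * (u * exp u))
        by (apply Rmult_le_compat_l; lra). nra. }
    assert (Rpower x b * u <= Rpower B P * u) by (apply Rmult_le_compat_r; lra).
    assert (Rpower B P * u <= Rpower B P * ((b-a) * B)).
    { apply Rmult_le_compat_l; [lra|]. unfold u. apply Rmult_le_compat_l; lra. }
    nra.
Qed.

Lemma lip x a b B P : 0 <= x <= B -> 1 <= B -> 1 <= a -> 1 <= b -> a <= P -> b <= P ->
  Rabs (rpow x a - rpow x b) <= Rabs (a - b) * (1 + B * Rpower B P).
Proof.
  intros. destruct (Rle_or_lt a b).
  - rewrite (Rabs_minus_sym a b), (Rabs_pos_eq (b-a)) by lra. apply lip_le; lra.
  - rewrite (Rabs_minus_sym (rpow x a)), (Rabs_pos_eq (a-b)) by lra. apply lip_le; lra.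
Qed.


Lemma sum_ext {E : Type} (f g : E -> R) l : (forall e, In e l -> f e = g e) -> sum_list f l = sum_list g l.
Proof. induction l; simpl; intros H; auto. rewrite H, IHl; auto. Qed.

Lemma sum_le {E : Type} (f g : E -> R) l : (forall e, In e l -> f e <= g e) -> sum_list f l <= sum_list g l.
Proof. induction l; simpl; intros H; [lra|]. pose proof (H a (or_introl eq_refl)).
  assert (sum_list f l <= sum_list g l) by auto. lra. Qed.

Lemma sum_nonneg {E : Type} (f : E -> R) l : (forall e, In e l -> 0 <= f e) -> 0 <= sum_list f l.
Proof. induction l; simpl; intros H; [lra|]. pose proof (H a (or_introl eq_refl)).
  assert (0 <= sum_list f l) by auto. lra. Qed.

Lemma sum_single {E : Type} (f : E -> R) l e : (forall e, In e l -> 0 <= f e) -> In e l -> f e <= sum_list f l.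
Proof. induction l; simpl; intros H Hi; [contradiction|].
  destruct Hi as [<-|Hi].
  - assert (0 <= sum_list f l) by (apply sum_nonneg; auto). lra.
  - pose proof (H a (or_introl eq_refl)). assert (f e <= sum_list f l) by auto. lra. Qed.

Lemma sum_lin {E : Type} (a b c : R) (f g h : E -> R) l :
  sum_list (fun e => a * f e + b * g e + c * h e) l = a * sum_list f l + b * sum_list g l + c * sum_list h l.
Proof. induction l; simpl; [ring|]. rewrite IHl. ring. Qed.

Lemma sum_scal {E : Type} (a : R) (f : E -> R) l : sum_list (fun e => a * f e) l = a * sum_list f l.
Proof. induction l; simpl; [ring|]. rewrite IHl. ring. Qed.

Lemma sum_plus {E : Type} (f g : E -> R) l : sum_list (fun e => f e + g e) l = sum_list f l + sum_list g l.
Proof. induction l; simpl; [ring|]. rewrite IHl. ring. Qed.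

Definition delta {E : Type} (e e' : E) : R := if excluded_middle_informative (e = e') then 1 else 0.

Lemma sum_delta {E : Type} (x : E -> R) l e' : NoDup l ->
  sum_list (fun e => x e * delta e e') l = if excluded_middle_informative (In e' l) then x e' else 0.
Proof.
  induction l; simpl; intros Hnd.
  - destruct (excluded_middle_informative False); [contradiction|ring].
  - inversion Hnd; subst. rewrite IHl by auto. unfold delta.
    destruct (excluded_middle_informative (a = e')) as [Ha|Ha];
    destruct (excluded_middle_informative (In e' l)) as [Hi|Hi];
    destruct (excluded_middle_informative (a = e' \/ In e' l)) as [Hj|Hj]; subst;
    try tauto; try ring.
Qed.

Lemma norm_sum {E : Type} (N : (E -> R) -> R) (HN : is_norm N) (x : E -> R) l :
  N (fun e' => sum_list (fun e => x e * delta e e') l) <= sum_list (fun e => Rabs (x e) * N (delta e)) l.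
Proof.
  destruct HN as [H0 [H1 [H2 H3]]].
  induction l; simpl.
  - replace (fun _ : E => 0) with (fun e : E => 0 * (fun _ : E => 0) e)
      by (apply functional_extensionality; intros; simpl; ring).
    rewrite H2, Rabs_R0. lra.
  - eapply Rle_trans. apply (H3 (fun e' => x a * delta a e')).
    rewrite H2. lra.
Qed.

Lemma norm_bound {E : Type} (N : (E -> R) -> R) (HN : is_norm N) (x : E -> R) l :
  NoDup l -> (forall e, In e l) ->
  N x <= sum_list (fun e => Rabs (x e) * N (delta e)) l.
Proof.
  intros Hnd Hall. eapply Rle_trans; [|apply norm_sum; auto].
  right. f_equal. apply functional_extensionality. intros e'.
  rewrite sum_delta by auto.
  destruct (excluded_middle_informative (In e' l)); [auto|exfalso; auto].
Qed.

Lemma walk_ne {V E : Type} d (ends : E -> V * V) u g : walk_from d ends u g -> exists e r, g = e :: r.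
Proof. intros H; destruct H; eauto. Qed.

Theorem mainTheorem11 (V E : Type) (directed : bool) (enumE : list E)
  (ends : E -> V * V) (sigma : E -> R)
  (Hgraph : simple_graph directed enumE ends)
  (Hsigma : forall e, 0 < sigma e)
  (Gamma : list E -> Prop)
  (Hwalks : forall g, Gamma g -> is_walk directed ends g)
  (Hne : exists g, Gamma g)
  (p : R) (Hp : 1 < p)
  (rho : R -> E -> R)
  (Hrho : forall q, 1 < q -> extremal_density enumE sigma Gamma q (rho q))
  (N : (E -> R) -> R) (HN : is_norm N) :
  forall eps, 0 < eps -> exists delta, 0 < delta /\
    forall q, 1 < q -> Rabs (q - p) < delta ->
      N (fun e => rho p e - rho q e) < eps.
Proof.
  destruct Hgraph as [Hnd [Hall _]].
  set (S := sum_list sigma enumE).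
  assert (HS : 0 <= S) by (apply sum_nonneg; intros; left; auto).
  assert (Hones : admissible Gamma (fun _ => 1)).
  { split; [intros; lra|]. intros g Hg. destruct (Hwalks g Hg) as [u Hu].
    destruct (walk_ne _ _ _ _ Hu) as [e [r ->]]. unfold rho_length; simpl.
    assert (0 <= sum_list (fun _ : E => 1) r) by (apply sum_nonneg; intros; lra). lra. }
  assert (Hen : forall q r, (forall e, 0 <= r e) ->
     energy enumE sigma q r = sum_list (fun e => sigma e * rpow (r e) q) enumE).
  { intros q r Hr. apply sum_ext. intros e _. rewrite Rabs_pos_eq; auto. }
  assert (Hen1 : forall q, energy enumE sigma q (fun _ => 1) = S).
  { intros q. rewrite Hen by (intros; lra). apply sum_ext. intros. rewrite rpow_1; ring. }
  set (B := 1 + sum_list (fun e => S / sigma e) enumE).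
  assert (HB1 : 1 <= B).
  { assert (0 <= sum_list (fun e => S / sigma e) enumE); [|unfold B; lra].
    apply sum_nonneg; intros. apply Rmult_le_pos; auto. left; apply Rinv_0_lt_compat; auto. }
  assert (Hbd : forall q, 1 < q -> forall e, 0 <= rho q e <= B).
  { intros q Hq e. destruct (Hrho q Hq) as [[Hnn Hl] Hmin].
    split; auto.
    pose proof (Hmin _ Hones) as Hm. rewrite Hen1, Hen in Hm by auto.
    assert (sigma e * rpow (rho q e) q <= S).
    { eapply Rle_trans; [|exact Hm]. apply sum_single with (f := fun e => sigma e * rpow (rho q e) q); auto.
      intros. apply Rmult_le_pos; [left; auto|apply rpow_nonneg]. }
    assert (S / sigma e <= B - 1).
    { unfold B. ring_simplify. apply sum_single with (f := fun e => S / sigma e); auto.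
      intros. apply Rmult_le_pos; auto. left; apply Rinv_0_lt_compat; auto. }
    destruct (Rle_or_lt (rho q e) 1); [lra|].
    rewrite rpow_pos in H by lra.
    assert (rho q e <= Rpower (rho q e) q).
    { rewrite <- (Rpower_1 (rho q e)) at 1 by lra. apply Rle_Rpower; lra. }
    assert (rho q e <= S / sigma e).
    { pose proof (Hsigma e). apply (Rmult_le_reg_l (sigma e)); auto.
      unfold Rdiv. rewrite <- Rmult_assoc, (Rmult_comm (sigma e) S), Rmult_assoc, Rinv_r by lra. nra. }
    lra. }
  set (s0 := / (1 + sum_list (fun e => / sigma e) enumE)).
  assert (Hsum0 : 0 <= sum_list (fun e => / sigma e) enumE).
  { apply sum_nonneg; intros. left; apply Rinv_0_lt_compat; auto. }
  assert (Hs0 : 0 < s0) by (unfold s0; apply Rinv_0_lt_compat; lra).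
  assert (Hs0s : forall e, s0 <= sigma e).
  { intros e. pose proof (Hsigma e).
    assert (/ sigma e <= sum_list (fun e => / sigma e) enumE).
    { apply sum_single with (f := fun e => / sigma e); auto. intros; left; apply Rinv_0_lt_compat; auto. }
    unfold s0. rewrite <- (Rinv_inv (sigma e)). apply Rinv_le_contravar.
    apply Rinv_0_lt_compat; auto. lra. }
  set (K := 1 + B * Rpower B (p+1)).
  assert (HK : 0 <= K) by (unfold K; pose proof (Rpower_pos B (p+1)); nra).
  assert (Hcmp : forall a b r, 1 <= a <= p+1 -> 1 <= b <= p+1 -> (forall e, 0 <= r e <= B) ->
     sum_list (fun e => sigma e * rpow (r e) a) enumE <=
     sum_list (fun e => sigma e * rpow (r e) b) enumE + Rabs (a - b) * K * S).
  { intros a b r Ha Hb Hr.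
    replace (Rabs (a-b) * K * S) with (sum_list (fun e => Rabs (a-b) * K * sigma e) enumE)
      by (rewrite sum_scal; reflexivity).
    rewrite <- sum_plus. apply sum_le. intros e _.
    pose proof (lip (r e) a b B (p+1) (Hr e) HB1 ltac:(lra) ltac:(lra) ltac:(lra) ltac:(lra)) as L.
    fold K in L. pose proof (Rle_abs (rpow (r e) a - rpow (r e) b)). pose proof (Hsigma e). nra. }
  assert (Hkey : forall eta, 0 < eta -> eta <= B -> exists delta, 0 < delta /\
     forall q, 1 < q -> Rabs (q - p) < delta -> forall e, Rabs (rho p e - rho q e) < eta).
  { intros eta He HeB.
    set (c := c_gap p B eta).
    assert (Hc : 0 < c) by (apply c_gap_pos; auto).
    exists (Rmin 1 (s0 * c / (K * S + 1))).
    assert (Hd2 : 0 < s0 * c / (K * S + 1)).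
    { apply Rdiv_lt_0_compat. nra. nra. }
    split; [apply Rmin_glb_lt; lra|].
    intros q Hq Hqp e.
    assert (Hqp1 : Rabs (q-p) < 1) by (eapply Rlt_le_trans; [exact Hqp|apply Rmin_l]).
    assert (Hqp2 : Rabs (q-p) < s0 * c / (K * S + 1)) by (eapply Rlt_le_trans; [exact Hqp|apply Rmin_r]).
    apply Rabs_def2 in Hqp1 as [Hq1 Hq2].
    apply Rnot_le_lt. intros Hge.
    destruct (Hrho p Hp) as [[Hpn Hpl] Hpmin].
    destruct (Hrho q Hq) as [[Hqn Hql] Hqmin].
    set (m := fun e => (rho p e + rho q e)/2).
    assert (Hm : admissible Gamma m).
    { split. intros e'; unfold m; pose proof (Hpn e'); pose proof (Hqn e'); lra.
      intros g Hg. unfold rho_length, m.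
      replace (sum_list (fun e => (rho p e + rho q e)/2) g) with
        (/2 * sum_list (rho p) g + /2 * sum_list (rho q) g + 0 * sum_list (rho p) g).
      - pose proof (Hpl g Hg); pose proof (Hql g Hg). unfold rho_length in *. lra.
      - rewrite <- sum_lin. apply sum_ext. intros; lra. }
    assert (Hmn : forall e, 0 <= m e) by (intros; unfold m; pose proof (Hpn e0); pose proof (Hqn e0); lra).
    pose proof (Hpmin m Hm) as E1.
    pose proof (Hqmin (rho p) (conj Hpn Hpl)) as E2.
    rewrite Hen in E1, E1, E2, E2 by auto.
    pose proof (Hcmp p q (rho q) ltac:(lra) ltac:(lra) (Hbd q Hq)) as E3.
    pose proof (Hcmp q p (rho p) ltac:(lra) ltac:(lra) (Hbd p Hp)) as E4.
    rewrite (Rabs_minus_sym p q) in E3.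
    set (gp := fun e => sigma e * ((rpow (rho p e) p + rpow (rho q e) p)/2 - rpow (m e) p)).
    assert (Hgp : sum_list gp enumE =
       /2 * sum_list (fun e => sigma e * rpow (rho p e) p) enumE +
       /2 * sum_list (fun e => sigma e * rpow (rho q e) p) enumE +
       (-1) * sum_list (fun e => sigma e * rpow (m e) p) enumE).
    { rewrite <- sum_lin. apply sum_ext. intros; unfold gp; lra. }
    assert (Hgn : forall e, In e enumE -> 0 <= gp e).
    { intros e' _. unfold gp. apply Rmult_le_pos; [left; auto|].
      unfold m. pose proof (midconv p (rho p e') (rho q e') ltac:(lra) (Hpn e') (Hqn e')). lra. }
    pose proof (sum_single gp enumE e Hgn (Hall e)) as E5.
    assert (E6 : sigma e * c <= gp e).
    { unfold gp. apply Rmult_le_compat_l; [left; auto|]. unfold m, c.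
      apply gap; auto. }
    assert (E7 : s0 * c <= sigma e * c) by (apply Rmult_le_compat_r; [lra|auto]).
    assert (E8 : Rabs (q - p) * (K * S + 1) < s0 * c).
    { assert (Hf : s0*c/(K*S+1)*(K*S+1) = s0*c) by (field; nra).
      assert (0 < K*S+1) by nra. rewrite <- Hf. apply Rmult_lt_compat_r; auto. }
    assert (E9 : 0 <= Rabs (q-p)) by apply Rabs_pos.
    assert (E10 : Rabs (q-p) * K * S < s0 * c) by nra.
    lra. }
  intros eps Heps.
  set (T := sum_list (fun e => N (delta e)) enumE).
  assert (HT : 0 <= T) by (apply sum_nonneg; intros; apply HN).
  set (eta := Rmin B (eps / (T + 1))).
  assert (Heta : 0 < eta) by (apply Rmin_glb_lt; [lra|apply Rdiv_lt_0_compat; lra]).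
  destruct (Hkey eta Heta (Rmin_l _ _)) as [d [Hd Hq]].
  exists d. split; auto. intros q Hq1 Hqd.
  eapply Rle_lt_trans; [apply (norm_bound N HN _ enumE Hnd Hall)|].
  apply Rle_lt_trans with (eta * T).
  - unfold T. rewrite <- sum_scal. apply sum_le. intros e _.
    apply Rmult_le_compat_r. apply HN. left; apply Hq; auto.
  - assert (eta <= eps / (T+1)) by apply Rmin_r.
    assert (eps / (T+1) * T < eps).
    { unfold Rdiv. rewrite Rmult_assoc. apply Rle_lt_trans with (eps * (/ (T+1) * T)); [lra|].
      rewrite <- (Rmult_1_r eps) at 2. apply Rmult_lt_compat_l; auto.
      apply (Rmult_lt_reg_l (T+1)); [lra|]. rewrite <- Rmult_assoc, Rinv_r by lra. lra. }
    nra.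
Qed.
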